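(* For all $m\in\mathbb{N}$: if $m$ is even, then $\frac{2^m}{3}-\frac{2^{2k}}{3}\in S_m$ for every integer $k$ with $0\leq k\leq\frac{m-4}{2}$; if $m$ is odd, then $\frac{2^m}{3}-\frac{2^{2k+1}}{3}\in S_m$ for every integer $k$ with $0\leq k\leq\frac{m-5}{2}$.
   Context: $\mathbb{N}=\{1,2,3,\dots\}$. The Collatz map $T:\mathbb{N}\to\mathbb{N}$ is $T(n)=\frac{3n+1}{2}$ if $n$ is odd and $T(n)=\frac{n}{2}$ if $n$ is even; $T^{(k)}$ denotes the $k$-fold composition. The total stopping time is $\sigma_\infty(1)=0$ and, for $n\geq 2$, $\sigma_\infty(n)=\inf\{k\in\mathbb{N}\cup\{\infty\} : T^{(k)}(n)=1\}$. Let $S_0=\{1\}$ and $S_k=\{n\in\mathbb{N}:\sigma_\infty(n)=k\}$ for $k\geq 1$. *)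

(* Defs.v *)
From mathcomp Require Import all_boot.
Set Implicit Arguments. Unset Strict Implicit. Unset Printing Implicit Defensive.

Definition collatzT (n : nat) : nat :=
  if odd n then (3 * n + 1)./2 else n./2.

(* n \in S_k, i.e. sigma_infty(n) = k, for n in N = {1,2,...}:
   - sigma_infty(1) = 0, so S_0 = {1};
   - for n >= 2, sigma_infty(n) = least k >= 1 with T^(k)(n) = 1
     (k = infty if none, in which case n lies in no S_k with k finite). *)
Definition in_S (k n : nat) : Prop :=
  (n = 1 /\ k = 0) \/
  (2 <= n /\ 1 <= k /\ iter k collatzT n = 1 /\
   forall j, 1 <= j < k -> iter j collatzT n <> 1).

(* Main.v *)
Require Import Defs.
From mathcomp Require Import all_boot.
From mathcomp Require Import zify.

Lemma T_double y : collatzT (2 * y) = y.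
Proof. by rewrite /collatzT mul2n odd_double doubleK. Qed.

Lemma iter_halve t y : iter t collatzT (2 ^ t * y) = y.
Proof.
elim: t y => [|t IH] y /=; first by rewrite mul1n.
by rewrite -/(iter t.+1 _ _) iterSr expnS -mulnA T_double IH.
Qed.

Lemma iter_halve_le t p y : t <= p -> iter t collatzT (2 ^ p * y) = 2 ^ (p - t) * y.
Proof.
move=> h; rewrite -(subnKC h) expnD -mulnA iter_halve; congr (_ * _); congr (2 ^ _); lia.
Qed.

Lemma pow_gt1 p : 0 < p -> 1 < 2 ^ p.
Proof. by case: p => // p _; rewrite expnS; have := expn_gt0 2 p; lia. Qed.

Lemma key j r a : 4 <= r -> 3 * a + 1 = 2 ^ r -> in_S (j + r) (2 ^ j * a).
Proof.
move=> hr ha.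
have a5 : 5 <= a.
  have : 2 ^ 4 <= 2 ^ r by rewrite leq_exp2l.
  rewrite -ha /=; lia.
have oa : odd a.
  apply/negPn/negP=> oa; have : odd (2 ^ r) by rewrite -ha oddD oddM /= (negbTE oa).
  rewrite oddX /=; case: (r) hr => //.
have Ta : collatzT a = 2 ^ (r - 1).
  rewrite /collatzT oa ha.
  have -> : 2 ^ r = 2 * 2 ^ (r - 1) by rewrite -expnS; congr (2 ^ _); lia.
  by rewrite mul2n doubleK.
have big : forall u, 1 <= u <= r -> iter (u + j) collatzT (2 ^ j * a) = 2 ^ (r - u).
  move=> [|s] // /andP[_ hs].
  rewrite iterD iter_halve iterSr Ta -[2 ^ (r - 1)]muln1 iter_halve_le ?muln1; last by lia.
  congr (2 ^ _); lia.
right; split.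
  have := expn_gt0 2 j; nia.
split; first lia.
split; first by rewrite addnC big ?subnn //; lia.
move=> t /andP[t1 tl].
case: (leqP t j) => htj.
  rewrite iter_halve_le //; have := expn_gt0 2 (j - t); nia.
rewrite -(subnK (ltnW htj)) big; last lia.
have : 1 < 2 ^ (r - (t - j)) by apply: pow_gt1; lia.
lia.
Qed.

Lemma ex4 s : exists a, 3 * a + 1 = 2 ^ (2 * s).
Proof.
elim: s => [|s [a ha]]; first by exists 0.
exists (4 * a + 1); rewrite mulnS expnD -ha; lia.
Qed.

Lemma div_form m j s : j + 2 * s = m -> 2 <= s ->
  in_S m ((2 ^ m - 2 ^ j) %/ 3).
Proof.
move=> hm hs; have [a ha] := ex4 s.
have -> : 2 ^ m - 2 ^ j = 3 * (2 ^ j * a).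
  by rewrite -hm expnD -ha mulnDr muln1 mulnCA addnK.
rewrite mulKn // -hm; apply: key => //; lia.
Qed.

Theorem mainTheorem5 (m : nat) : 1 <= m ->
  (~~ odd m -> forall k : nat, 2 * k + 4 <= m ->
      in_S m ((2 ^ m - 2 ^ (2 * k)) %/ 3)) /\
  (odd m -> forall k : nat, 2 * k + 5 <= m ->
      in_S m ((2 ^ m - 2 ^ (2 * k + 1)) %/ 3)).
Proof.
move=> _; split=> om k hk.
  have hm := odd_double_half m; rewrite (negbTE om) add0n in hm.
  apply: (@div_form _ _ (m./2 - k)); lia.
have hm := odd_double_half m; rewrite om in hm.
apply: (@div_form _ _ (m./2 - k)); lia.
Qed.
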